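(* Let $(K,\le)$ be a linearly ordered set which is compact in its order topology, and let $d:K\times K\to[0,+\infty)$ be a symmetric map with $d(x,y)>0$ whenever $x\neq y$, such that for every $x<y$ in $K$ with $]x,y[\neq\emptyset$ and every $\varepsilon>0$ there exist $u<v$ with $]u,v[$ a nonempty open interval contained in $]x,y[$ and $\sup\{d(s,t): s,t\in\,]u,v[\}<\varepsilon$. Then $K$ is almost totally disconnected.
   Context: Here $]x,y[=\{z\in K: x<z<y\}$. For a set $\Gamma$, $\Sigma_0^1[0,1]^\Gamma$ is the subspace of $[0,1]^\Gamma$ (product topology) consisting of those $x$ with $x_\gamma\in\{0,1\}$ for all but countably many $\gamma$. A compact space is almost totally disconnected if it is homeomorphic to a subspace of $\Sigma_0^1[0,1]^\Gamma$ for some set $\Gamma$. *)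

(* Defs.v *)
From Stdlib Require Import Reals List.
Open Scope R_scope.

Definition linear_order {K : Type} (le : K -> K -> Prop) : Prop :=
  (forall x, le x x) /\
  (forall x y, le x y -> le y x -> x = y) /\
  (forall x y z, le x y -> le y z -> le x z) /\
  (forall x y, le x y \/ le y x).

Definition lt_of {K : Type} (le : K -> K -> Prop) (x y : K) : Prop :=
  le x y /\ x <> y.

Definition oint {K : Type} (le : K -> K -> Prop) (x y : K) : K -> Prop :=
  fun z => lt_of le x z /\ lt_of le z y.

(* finite intersections of subbasic open rays {z | a < z}, {z | z < b}
   (None = no constraint) *)
Definition ray_box {K : Type} (le : K -> K -> Prop) (oa ob : option K) : K -> Prop :=
  fun z => (match oa with Some a => lt_of le a z | None => True end) /\
           (match ob with Some b => lt_of le z b | None => True end).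

Definition order_open {K : Type} (le : K -> K -> Prop) (U : K -> Prop) : Prop :=
  forall x, U x -> exists oa ob, ray_box le oa ob x /\
                    (forall z, ray_box le oa ob z -> U z).

Definition compact_space {X : Type} (is_open : (X -> Prop) -> Prop) : Prop :=
  forall (I : Type) (U : I -> X -> Prop),
    (forall i, is_open (U i)) -> (forall x, exists i, U i x) ->
    exists l : list I, forall x, exists i, In i l /\ U i x.

Definition prod_open {G : Type} (W : (G -> R) -> Prop) : Prop :=
  forall p, W p -> exists (l : list G) (eps : R), 0 < eps /\
    (forall q, (forall g, In g l -> Rabs (q g - p g) < eps) -> W q).

Definition continuous_between {X Y : Type} (openX : (X -> Prop) -> Prop)
  (openY : (Y -> Prop) -> Prop) (f : X -> Y) : Prop :=
  forall V, openY V -> openX (fun x => V (f x)).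

Definition embedding {X Y : Type} (openX : (X -> Prop) -> Prop)
  (openY : (Y -> Prop) -> Prop) (f : X -> Y) : Prop :=
  (forall x y, f x = f y -> x = y) /\
  continuous_between openX openY f /\
  (forall U, openX U -> exists V, openY V /\
     (forall x, U x <-> V (f x))).

Definition countable_set {G : Type} (A : G -> Prop) : Prop :=
  exists h : G -> nat, forall g g', A g -> A g' -> h g = h g' -> g = g'.

Definition in_Sigma01 {G : Type} (p : G -> R) : Prop :=
  (forall g, 0 <= p g <= 1) /\
  countable_set (fun g => p g <> 0 /\ p g <> 1).

Definition almost_totally_disconnected {X : Type} (openX : (X -> Prop) -> Prop) : Prop :=
  exists (G : Type) (f : X -> (G -> R)),
    (forall x, in_Sigma01 (f x)) /\ embedding openX (@prod_open G) f.

(* Main.v *)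
Require Import Defs.
From Stdlib Require Import Reals Lra Lia List Classical ClassicalEpsilon FunctionalExtensionality PropExtensionality Arith ZArith.
Open Scope R_scope.

Section Ord.
Variable K : Type.
Variable le : K -> K -> Prop.
Hypothesis Hlin : linear_order le.
Local Notation lt := (lt_of le).

Lemma le_refl x : le x x. Proof. apply Hlin. Qed.
Lemma le_antisym x y : le x y -> le y x -> x = y. Proof. apply Hlin. Qed.
Lemma le_trans x y z : le x y -> le y z -> le x z. Proof. apply Hlin. Qed.
Lemma le_total x y : le x y \/ le y x. Proof. apply Hlin. Qed.

Lemma lt_le x y : lt x y -> le x y. Proof. intros [H _]; exact H. Qed.
Lemma lt_irrefl x : ~ lt x x. Proof. intros [_ H]; auto. Qed.
Lemma lt_not_le x y : lt x y -> ~ le y x.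
Proof. intros [H1 H2] H3. apply H2. apply le_antisym; auto. Qed.
Lemma not_le_lt x y : ~ le x y -> lt y x.
Proof. intros H. destruct (le_total x y) as [h|h]; [tauto|]. split; auto. intro e; subst; apply H, le_refl. Qed.
Lemma le_or_lt x y : le x y \/ lt y x.
Proof. destruct (classic (le x y)); auto. right; apply not_le_lt; auto. Qed.
Lemma lt_le_trans x y z : lt x y -> le y z -> lt x z.
Proof. intros [h1 h2] h3. split. eapply le_trans; eauto. intro e; subst. apply h2, le_antisym; auto. Qed.
Lemma le_lt_trans x y z : le x y -> lt y z -> lt x z.
Proof. intros h1 [h2 h3]. split. eapply le_trans; eauto. intro e; subst. apply h3, le_antisym; auto. Qed.
Lemma lt_trans x y z : lt x y -> lt y z -> lt x z.
Proof. intros h1 h2. eapply lt_le_trans; eauto. apply lt_le; auto. Qed.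

Lemma nested (Hc : compact_space (order_open le)) (x y : nat -> K) :
  (forall k, le (x k) (x (S k))) -> (forall k, le (y (S k)) (y k)) ->
  (forall k, le (x k) (y k)) ->
  exists z, forall k, le (x k) z /\ le z (y k).
Proof.
  intros Hx Hy Hxy.
  assert (Mx : forall i j, (i <= j)%nat -> le (x i) (x j)).
  { intros i j h; induction h. apply le_refl. eapply le_trans; eauto. }
  assert (My : forall i j, (i <= j)%nat -> le (y j) (y i)).
  { intros i j h; induction h. apply le_refl. eapply le_trans; eauto. }
  apply NNPP; intro Hn.
  set (U := fun (k : nat) z => lt z (x k) \/ lt (y k) z).
  destruct (Hc nat U) as [l Hl].
  - intros k z [h|h].
    + exists None, (Some (x k)). split. split; simpl; auto. intros w [_ hw]; left; exact hw.
    + exists (Some (y k)), None. split. split; simpl; auto. intros w [hw _]; right; exact hw.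
  - intro z. apply NNPP; intro H. apply Hn. exists z. intro k.
    split; apply NNPP; intro h; apply H; exists k; unfold U.
    + left; apply not_le_lt; auto.
    + right; apply not_le_lt; auto.
  - set (m := fold_right max 0%nat l).
    assert (Hm : forall i, In i l -> (i <= m)%nat).
    { unfold m; clear; induction l as [|a l IH]; simpl; [tauto|]. intros i [e|h]; [subst; lia|].
      specialize (IH i h); lia. }
    destruct (Hl (x m)) as [i [Hi [h|h]]].
    + apply (lt_not_le _ _ h). apply Mx, Hm; auto.
    + apply (lt_not_le _ _ h). eapply le_trans; [apply Hxy|]. apply My, Hm; auto.
Qed.

End Ord.

Lemma seq_choice {A : Type} (P : A -> Prop) (R : nat -> A -> A -> Prop) (a0 : A) :
  P a0 -> (forall k a, P a -> exists b, P b /\ R k a b) ->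
  exists s : nat -> A, s 0%nat = a0 /\ forall k, P (s k) /\ R k (s k) (s (S k)).
Proof.
  intros H0 Hs.
  set (step := fun k a => match excluded_middle_informative (exists b, P b /\ R k a b) with
                          | left h => proj1_sig (constructive_indefinite_description _ h)
                          | right _ => a end).
  set (s := fix s n := match n with O => a0 | S k => step k (s k) end).
  exists s. split. reflexivity.
  assert (HP : forall k, P (s k)).
  { induction k; simpl; auto. unfold step.
    destruct excluded_middle_informative as [h|h].
    exact (proj1 (proj2_sig (constructive_indefinite_description _ h))). auto. }
  intro k. split; auto. simpl. unfold step.
  destruct excluded_middle_informative as [h|h].
  exact (proj2 (proj2_sig (constructive_indefinite_description _ h))).
  exfalso; apply h; apply Hs; auto.
Qed.

Section Zorn.
Variable T : Type.
Variable C : T -> Prop.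
Variable meets : T -> T -> Prop.
Hypothesis Hsym : forall p q, meets p q -> meets q p.
Hypothesis Hself : forall p, C p -> meets p p.

Definition sub (X Y : T -> Prop) := forall p, X p -> Y p.

Lemma sub_eq X Y : sub X Y -> sub Y X -> X = Y.
Proof. intros h1 h2. apply functional_extensionality; intro p.
  apply propositional_extensionality; split; auto. Qed.

Definition succ (X : T -> Prop) : T -> Prop :=
  match excluded_middle_informative (exists q, C q /\ forall p, X p -> ~ meets p q) with
  | left h => fun p => X p \/ p = proj1_sig (constructive_indefinite_description _ h)
  | right _ => X end.

Lemma succ_ext X : sub X (succ X).
Proof. intros p h; unfold succ; destruct excluded_middle_informative; auto. Qed.

Inductive tower : (T -> Prop) -> Prop :=
| t_succ X : tower X -> tower (succ X)
| t_union (S : (T -> Prop) -> Prop) : (forall X, S X -> tower X) -> tower (fun p => exists X, S X /\ X p).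

Definition normal X := forall Y, tower Y -> sub Y X -> Y = X \/ sub (succ Y) X.

Lemma L1 X : normal X -> forall Y, tower Y -> sub Y X \/ sub (succ X) Y.
Proof.
  intros HX Y HY. induction HY as [Y HY IH|S HS IH].
  - destruct IH as [h|h].
    + destruct (HX Y HY h) as [e|h2]. subst; right; intros p q; auto. left; auto.
    + right. intros p q. apply succ_ext; auto.
  - destruct (classic (exists Z, S Z /\ sub (succ X) Z)) as [[Z [h1 h2]]|h].
    + right. intros p q. exists Z; auto.
    + left. intros p [Z [h1 h2]]. destruct (IH Z h1) as [h3|h3]; auto.
      exfalso; apply h; eauto.
Qed.

Lemma L2 X : tower X -> normal X.
Proof.
  intro HX. induction HX as [X HX IH|S HS IH].
  - intros Y HY hsub. destruct (L1 X IH Y HY) as [h|h].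
    + destruct (IH Y HY h) as [e|h2].
      * subst. right; intros p q; auto.
      * right. intros p q. apply succ_ext; auto.
    + left. apply sub_eq; auto.
  - intros Y HY hsub.
    destruct (classic (forall Z, S Z -> sub (succ Z) Y)) as [h|h].
    + left. apply sub_eq; auto. intros p [Z [h1 h2]]. apply (h Z h1). apply succ_ext; auto.
    + apply not_all_ex_not in h. destruct h as [Z h]. apply imply_to_and in h. destruct h as [hZ h].
      destruct (L1 Z (IH Z hZ) Y HY) as [h3|h3]; [|tauto].
      destruct (IH Z hZ Y HY h3) as [e|h4].
      * subst Y. destruct (L1 Z (IH Z hZ) _ (t_union S HS)) as [h5|h5].
        -- left. apply sub_eq; auto.
        -- right; auto.
      * right. intros p q. exists Z; auto.
Qed.

Lemma comparable X Y : tower X -> tower Y -> sub X Y \/ sub Y X.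
Proof.
  intros HX HY. destruct (L1 X (L2 X HX) Y HY) as [h|h]; auto.
  left. intros p q. apply h, succ_ext; auto.
Qed.

Definition good X := (forall p, X p -> C p) /\ (forall p q, X p -> X q -> meets p q -> p = q).

Lemma tower_good X : tower X -> good X.
Proof.
  intro HX. induction HX as [X HX IH|S HS IH].
  - unfold succ. destruct excluded_middle_informative as [h|h]; auto.
    destruct (proj2_sig (constructive_indefinite_description _ h)) as [hC hD].
    set (q0 := proj1_sig (constructive_indefinite_description _ h)) in *.
    destruct IH as [IH1 IH2]. split.
    + intros p [hp|e]; [auto|subst; auto].
    + intros p q [hp|ep] [hq|eq] hm.
      * auto.
      * subst q. exfalso; eapply hD; eauto.
      * subst p. exfalso; eapply hD; eauto.
      * congruence.
  - split.
    + intros p [Z [h1 h2]]. apply (IH Z h1); auto.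
    + intros p q [Z1 [h1 h2]] [Z2 [h3 h4]] hm.
      destruct (comparable Z1 Z2 (HS Z1 h1) (HS Z2 h3)) as [h|h].
      * apply (IH Z2 h3); auto.
      * apply (IH Z1 h1); auto.
Qed.

Theorem maximal_family : exists P : T -> Prop,
  (forall p, P p -> C p) /\ (forall p q, P p -> P q -> meets p q -> p = q) /\
  (forall q, C q -> exists p, P p /\ meets p q).
Proof.
  set (Top := fun p => exists X, tower X /\ X p).
  assert (HT : tower Top) by (apply t_union; auto).
  destruct (tower_good Top HT) as [g1 g2].
  exists Top. split; auto. split; auto.
  intros q hq. apply NNPP; intro hn.
  assert (hsub : sub (succ Top) Top) by (intros p hp; exists (succ Top); split; auto; apply t_succ; auto).
  revert hsub. unfold succ. destruct excluded_middle_informative as [h|h].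
  - destruct (proj2_sig (constructive_indefinite_description _ h)) as [hC hD].
    set (q0 := proj1_sig (constructive_indefinite_description _ h)) in *.
    intro hs. apply (hD q0). apply hs; auto. apply Hself; auto.
  - intros _. apply h. exists q. split; auto. intros p hp hm. apply hn; eauto.
Qed.
End Zorn.

Lemma exists_nat_gt (r : R) : exists n : nat, r < INR n.
Proof.
  destruct (archimed r) as [h1 _].
  destruct (Z_le_gt_dec 0 (up r)) as [h|h].
  - exists (Z.to_nat (up r)). rewrite INR_IZR_INZ, Z2Nat.id; auto.
  - exists 0%nat. simpl. apply Z.gt_lt in h. apply IZR_lt in h. lra.
Qed.

Lemma pow2_ge (t : nat) : INR t + 1 <= 2 ^ t.
Proof. induction t. simpl; lra. rewrite S_INR. simpl. assert (0 <= INR t) by apply pos_INR. lra. Qed.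

Lemma pow2_small (d : R) : 0 < d -> exists t, / 2 ^ t < d.
Proof.
  intro hd. destruct (exists_nat_gt (/ d)) as [n hn]. exists n.
  assert (h2 := pow2_ge n). assert (0 < 2 ^ n) by (apply pow_lt; lra).
  rewrite <- (Rinv_inv d). apply Rinv_lt_contravar. apply Rmult_lt_0_compat; auto; apply Rinv_0_lt_compat; auto. lra.
Qed.

Lemma min_nat (P : nat -> Prop) (n : nat) : P n -> exists i, P i /\ (i <= n)%nat /\ forall j, (j < i)%nat -> ~ P j.
Proof.
  induction n as [n IH] using lt_wf_ind. intro hn.
  destruct (classic (exists j, (j < n)%nat /\ P j)) as [[j [hj pj]]|h].
  - destruct (IH j hj pj) as [i [h1 [h2 h3]]]. exists i; repeat split; auto. lia.
  - exists n; repeat split; auto. intros j hj pj. apply h; eauto.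
Qed.

Lemma Rdiv_le_0_compat a b : 0 <= a -> 0 < b -> 0 <= a / b.
Proof. intros. unfold Rdiv. apply Rmult_le_pos; auto. left; apply Rinv_0_lt_compat; auto. Qed.

Lemma INR2pow t : INR (2 ^ t) = 2 ^ t.
Proof. rewrite pow_INR. reflexivity. Qed.

Definition dense_on {K : Type} (le : K -> K -> Prop) (a b : K) :=
  forall c e, le a c -> lt_of le c e -> le e b -> exists w, oint le c e w.

Definition mid {K : Type} (le : K -> K -> Prop) (c e : K) : K :=
  match excluded_middle_informative (exists w, oint le c e w) with
  | left h => proj1_sig (constructive_indefinite_description _ h)
  | right _ => c end.

Fixpoint pt {K : Type} (le : K -> K -> Prop) (u v : K) (k i : nat) : K :=
  match k with
  | O => match i with O => u | _ => v end
  | S k' => if Nat.even i then pt le u v k' (Nat.div2 i)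
            else mid le (pt le u v k' (Nat.div2 i)) (pt le u v k' (S (Nat.div2 i)))
  end.

Definition Sset {K : Type} (le : K -> K -> Prop) (u v x : K) (r : R) : Prop :=
  r = 0 \/ exists k i, (i <= 2 ^ k)%nat /\ le (pt le u v k i) x /\ r = INR i / 2 ^ k.

Lemma Sset_bound {K : Type} (le : K -> K -> Prop) u v x r : Sset le u v x r -> 0 <= r <= 1.
Proof.
  intros [e|[k [i [h1 [_ e]]]]]; subst. lra.
  assert (0 < 2 ^ k) by (apply pow_lt; lra).
  apply le_INR in h1. rewrite INR2pow in h1. split.
  apply Rdiv_le_0_compat; auto. apply pos_INR.
  apply Rmult_le_reg_r with (2^k); auto. unfold Rdiv. rewrite Rmult_assoc, Rinv_l; lra.
Qed.

Definition urys {K : Type} (le : K -> K -> Prop) (u v x : K) : R.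
Proof.
  refine (proj1_sig (completeness (Sset le u v x) _ _)).
  - exists 1. intros r hr. apply (Sset_bound le u v x r hr).
  - exists 0. left; auto.
Defined.

Lemma urys_ub {K : Type} (le : K -> K -> Prop) u v x r : Sset le u v x r -> r <= urys le u v x.
Proof. unfold urys. destruct completeness as [m [h1 h2]]; simpl. apply h1. Qed.
Lemma urys_lub {K : Type} (le : K -> K -> Prop) u v x b : (forall r, Sset le u v x r -> r <= b) -> urys le u v x <= b.
Proof. unfold urys. destruct completeness as [m [h1 h2]]; simpl. apply h2. Qed.

Section Urys.
Variable K : Type.
Variable le : K -> K -> Prop.
Hypothesis Hlin : linear_order le.
Local Notation lt := (lt_of le).
Variables u v : K.
Hypothesis Huv : lt u v.
Hypothesis Hd : dense_on le u v.
Local Notation pt := (pt le u v).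
Local Notation phi := (urys le u v).

Lemma mid_spec c e : le u c -> lt c e -> le e v -> lt c (mid le c e) /\ lt (mid le c e) e.
Proof.
  intros h1 h2 h3. unfold mid. destruct excluded_middle_informative as [h|h].
  - exact (proj2_sig (constructive_indefinite_description _ h)).
  - exfalso; apply h; apply Hd; auto.
Qed.

Lemma pt_S k i : pt (S k) i = if Nat.even i then pt k (Nat.div2 i)
            else mid le (pt k (Nat.div2 i)) (pt k (S (Nat.div2 i))).
Proof. reflexivity. Qed.

Lemma pt_double k i : pt (S k) (2 * i) = pt k i.
Proof. rewrite pt_S, Nat.even_even, Nat.div2_double. reflexivity. Qed.

Lemma pt_odd k i : pt (S k) (2 * i + 1) = mid le (pt k i) (pt k (S i)).
Proof. rewrite pt_S, Nat.even_odd. replace (2*i+1)%nat with (S (2*i)) by lia.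
  rewrite Nat.div2_succ_double. reflexivity. Qed.

Lemma chain (s : nat -> K) N : (forall i, (i < N)%nat -> lt (s i) (s (S i))) ->
  forall i j, (i < j)%nat -> (j <= N)%nat -> lt (s i) (s j).
Proof.
  intros H i j hij. induction hij as [|j hij IH]; intro hN.
  - apply H; lia.
  - apply (lt_trans _ _ Hlin _ (s j)). apply IH; lia. apply H; lia.
Qed.

Definition Inv k := (forall i, (i < 2 ^ k)%nat -> lt (pt k i) (pt k (S i))) /\ pt k 0 = u /\ pt k (2 ^ k) = v.

Lemma Inv_bounds k : Inv k -> forall i, (i <= 2 ^ k)%nat -> le u (pt k i) /\ le (pt k i) v.
Proof.
  intros [H [h0 h1]] i hi. split.
  - destruct (Nat.eq_dec i 0). subst; rewrite h0; apply le_refl; auto.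
    assert (hh : lt (pt k 0) (pt k i)) by (apply (chain (pt k) (2^k)); auto; lia). rewrite h0 in hh. apply lt_le; auto.
  - destruct (Nat.eq_dec i (2^k)). subst; rewrite h1; apply le_refl; auto.
    assert (hh : lt (pt k i) (pt k (2^k))) by (apply (chain (pt k) (2^k)); auto; lia). rewrite h1 in hh. apply lt_le; auto.
Qed.

Lemma Inv_all k : Inv k.
Proof.
  induction k.
  - split; [|split; reflexivity]. intros i hi. simpl in hi. assert (i = 0%nat) by lia. subst. simpl. auto.
  - assert (IHb := Inv_bounds k IHk). destruct IHk as [H [h0 h1]].
    assert (e2 : (2 ^ S k = 2 * 2 ^ k)%nat) by (simpl; lia).
    split; [|split].
    + intros i hi. destruct (Nat.Even_or_Odd i) as [[m ->]|[m ->]].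
      * rewrite pt_double. replace (S (2*m)) with (2*m+1)%nat by lia. rewrite pt_odd.
        assert (hm : (m < 2^k)%nat) by lia.
        apply mid_spec. apply (IHb m); lia. apply H; auto. apply (IHb (S m)); lia.
      * rewrite pt_odd. replace (S (2*m+1)) with (2*(S m))%nat by lia. rewrite pt_double.
        assert (hm : (m < 2^k)%nat) by lia.
        apply mid_spec. apply (IHb m); lia. apply H; auto. apply (IHb (S m)); lia.
    + replace 0%nat with (2*0)%nat by lia. rewrite pt_double. auto.
    + rewrite e2, pt_double. auto.
Qed.

Lemma pt_strict k i j : (i < j)%nat -> (j <= 2 ^ k)%nat -> lt (pt k i) (pt k j).
Proof. intros. destruct (Inv_all k) as [HH _]. apply (chain (pt k) (2^k)); auto. Qed.

Lemma pt_lift k t i : pt (k + t) (i * 2 ^ t) = pt k i.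
Proof.
  induction t. simpl. rewrite Nat.add_0_r, Nat.mul_1_r; auto.
  rewrite Nat.add_succ_r. replace (i * 2 ^ S t)%nat with (2 * (i * 2 ^ t))%nat by (simpl; lia).
  rewrite pt_double; auto.
Qed.

Lemma pt_cmp k i m j : (i <= 2 ^ k)%nat -> (j <= 2 ^ m)%nat -> le (pt m j) (pt k i) ->
  (j * 2 ^ k <= i * 2 ^ m)%nat.
Proof.
  intros hi hj hle. destruct (le_lt_dec (j * 2^k) (i * 2^m)) as [h|h]; auto. exfalso.
  rewrite <- (pt_lift k m i) in hle. rewrite <- (pt_lift m k j) in hle.
  rewrite (Nat.add_comm m k) in hle.
  apply (lt_not_le _ _ Hlin _ _ (pt_strict (k+m) _ _ h ltac:(rewrite Nat.pow_add_r; nia))). auto.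
Qed.

Lemma div_le_cross a b c e : 0 < c -> 0 < e -> a * e <= b * c -> a / c <= b / e.
Proof.
  intros hc he h. apply Rmult_le_reg_r with (c * e). nra.
  replace (a / c * (c * e)) with (a * e) by (field; lra).
  replace (b / e * (c * e)) with (b * c) by (field; lra). auto.
Qed.

Lemma phi_bounds x : 0 <= phi x <= 1.
Proof. split. apply urys_ub. left; auto. apply urys_lub. intros r hr. apply (Sset_bound le u v x r hr). Qed.

Lemma phi_mono x y : le x y -> phi x <= phi y.
Proof.
  intro h. apply urys_lub. intros r [e|[k [i [h1 [h2 e]]]]]; apply urys_ub.
  left; auto. right. exists k, i. repeat split; auto. eapply le_trans; eauto.
Qed.

Lemma phi_pt k i : (i <= 2 ^ k)%nat -> phi (pt k i) = INR i / 2 ^ k.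
Proof.
  intro hi. apply Rle_antisym.
  - apply urys_lub. intros r [e|[m [j [h1 [h2 e]]]]]; subst.
    + apply Rdiv_le_0_compat. apply pos_INR. apply pow_lt; lra.
    + apply div_le_cross; try (apply pow_lt; lra). rewrite <- !INR2pow, <- !mult_INR.
      apply le_INR. apply pt_cmp; auto.
  - apply urys_ub. right. exists k, i. repeat split; auto. apply le_refl; auto.
Qed.

Lemma phi_low x : le x u -> phi x = 0.
Proof.
  intro h. apply Rle_antisym; [|apply phi_bounds].
  apply urys_lub. intros r [e|[m [j [h1 [h2 e]]]]]; subst. lra.
  assert (hu : pt 0 0 = u) by reflexivity.
  assert (h3 := pt_cmp 0 0 m j ltac:(simpl; lia) h1 ltac:(rewrite hu; eapply le_trans; eauto)).
  assert (j = 0%nat) by (simpl in h3; lia). subst. simpl. lra.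
Qed.

Lemma phi_high x : le v x -> phi x = 1.
Proof.
  intro h. apply Rle_antisym; [apply phi_bounds|].
  replace 1 with (INR 1 / 2 ^ 0) by (simpl; lra). apply urys_ub. right. exists 0%nat, 1%nat.
  repeat split; auto. 
Qed.

Lemma phi_lower x eps : 0 < eps -> exists oa : option K,
  (match oa with Some a => lt a x | None => True end) /\
  forall z, (match oa with Some a => lt a z | None => True end) -> phi x - eps < phi z.
Proof.
  intro he. destruct (Rlt_dec (phi x - eps) 0) as [hneg|hpos].
  - exists None. split; auto. intros z _. assert (h := phi_bounds z). lra.
  - assert (hr : exists r, Sset le u v x r /\ phi x - eps < r).
    { apply NNPP; intro hn. assert (phi x <= phi x - eps); [|lra].
      apply urys_lub. intros r hr. apply Rnot_lt_le. intro h. apply hn; eauto. }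
    destruct hr as [r [[e|[m [j [h1 [h2 e]]]]] hr]]; [subst; lra|].
    assert (hj : (1 <= j)%nat). { destruct j; [|lia]. subst. simpl in hr. unfold Rdiv in hr. lra. }
    destruct (pow2_small (r - (phi x - eps))) as [t ht]; [lra|].
    assert (hjt : (1 <= j * 2 ^ t)%nat) by (assert (2^t <> 0)%nat by (apply Nat.pow_nonzero; lia); nia).
    assert (hjt2 : (j * 2 ^ t <= 2 ^ (m + t))%nat) by (rewrite Nat.pow_add_r; nia).
    exists (Some (pt (m + t) (j * 2 ^ t - 1))). split.
    + eapply lt_le_trans; [auto| |apply h2]. rewrite <- (pt_lift m t j). apply pt_strict; lia.
    + intros z hz. eapply Rlt_le_trans; [|apply phi_mono; apply lt_le; eauto].
      rewrite phi_pt by lia. rewrite minus_INR by lia. rewrite mult_INR, INR2pow. simpl INR.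
      assert (0 < 2 ^ m) by (apply pow_lt; lra). assert (0 < 2 ^ t) by (apply pow_lt; lra).
      assert (/ 2 ^ (m + t) <= / 2 ^ t).
      { apply Rinv_le_contravar; auto. rewrite pow_add.
        assert (1 <= 2 ^ m) by (apply pow_R1_Rle; lra). nra. }
      replace ((INR j * 2 ^ t - 1) / 2 ^ (m + t)) with (r - / 2 ^ (m + t)).
      lra. rewrite e, pow_add. field. lra.
Qed.

Lemma phi_upper x eps : 0 < eps -> exists ob : option K,
  (match ob with Some b => lt x b | None => True end) /\
  forall z, (match ob with Some b => lt z b | None => True end) -> phi z < phi x + eps.
Proof.
  intro he. destruct (Rlt_dec 1 (phi x + eps)) as [hbig|hsm].
  - exists None. split; auto. intros z _. assert (h := phi_bounds z). lra.
  - destruct (pow2_small eps he) as [t ht].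
    assert (h2t : 0 < 2 ^ t) by (apply pow_lt; lra).
    destruct (min_nat (fun i => phi x < INR i / 2 ^ t) (2 ^ t)) as [i [hi1 [hi2 hi3]]].
    { rewrite INR2pow. unfold Rdiv. rewrite Rinv_r; lra. }
    assert (hi0 : (1 <= i)%nat).
    { destruct i; [|lia]. simpl in hi1. assert (h := phi_bounds x). unfold Rdiv in hi1. lra. }
    assert (hprev := hi3 (i - 1)%nat ltac:(lia)). apply Rnot_lt_le in hprev.
    rewrite minus_INR in hprev by lia. simpl INR in hprev.
    assert (hv : INR i / 2 ^ t < phi x + eps).
    { replace (INR i / 2 ^ t) with ((INR i - 1) / 2 ^ t + / 2 ^ t) by (field; lra). lra. }
    exists (Some (pt t i)). split.
    + apply not_le_lt; auto. intro h. apply phi_mono in h. rewrite phi_pt in h by auto. lra.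
    + intros z hz. apply lt_le in hz. apply phi_mono in hz. rewrite phi_pt in hz by auto. lra.
Qed.

End Urys.

Section Emb.
Variable K : Type.
Variable le : K -> K -> Prop.
Hypothesis Hlin : linear_order le.
Local Notation lt := (lt_of le).

Definition lowb (oa : option K) z := match oa with Some a => lt a z | None => True end.
Definition uppb (ob : option K) z := match ob with Some b => lt z b | None => True end.

Lemma box_inter oa1 ob1 oa2 ob2 x : ray_box le oa1 ob1 x -> ray_box le oa2 ob2 x ->
  exists oa ob, ray_box le oa ob x /\ forall z, ray_box le oa ob z -> ray_box le oa1 ob1 z /\ ray_box le oa2 ob2 z.
Proof.
  intros [h1 h2] [h3 h4].
  assert (HL : exists oa, lowb oa x /\ forall z, lowb oa z -> lowb oa1 z /\ lowb oa2 z).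
  { destruct oa1 as [a1|], oa2 as [a2|].
    - destruct (le_total _ _ Hlin a1 a2).
      + exists (Some a2); split; [simpl in *; auto|]. intros z hz; simpl in *; split; auto; eapply (le_lt_trans _ _ Hlin); eauto.
      + exists (Some a1); split; [simpl in *; auto|]. intros z hz; simpl in *; split; auto; eapply (le_lt_trans _ _ Hlin); eauto.
    - exists (Some a1); split; [simpl in *; auto|]; intros; simpl in *; split; auto.
    - exists (Some a2); split; [simpl in *; auto|]; intros; simpl in *; split; auto.
    - exists None; split; simpl; auto. }
  assert (HU : exists ob, uppb ob x /\ forall z, uppb ob z -> uppb ob1 z /\ uppb ob2 z).
  { destruct ob1 as [a1|], ob2 as [a2|].
    - destruct (le_total _ _ Hlin a1 a2).
      + exists (Some a1); split; [simpl in *; auto|]. intros z hz; simpl in *; split; auto; eapply (lt_le_trans _ _ Hlin); eauto.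
      + exists (Some a2); split; [simpl in *; auto|]. intros z hz; simpl in *; split; auto; eapply (lt_le_trans _ _ Hlin); eauto.
    - exists (Some a1); split; [simpl in *; auto|]; intros; simpl in *; split; auto.
    - exists (Some a2); split; [simpl in *; auto|]; intros; simpl in *; split; auto.
    - exists None; split; simpl; auto. }
  destruct HL as [oa [hl hl2]], HU as [ob [hu hu2]].
  exists oa, ob. split. split; auto. intros z [hz1 hz2].
  destruct (hl2 z hz1), (hu2 z hz2). split; split; auto.
Qed.

Variable G : Type.
Variable f : G -> K -> R.
Hypothesis Hb : forall g x, 0 <= f g x <= 1.
Hypothesis Hm : forall g x y, le x y -> f g x <= f g y.
Hypothesis Hc : forall g x eps, 0 < eps -> exists oa ob, ray_box le oa ob x /\
   forall z, ray_box le oa ob z -> Rabs (f g z - f g x) < eps.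
Hypothesis Hs : forall a b, lt a b -> exists g, f g a < f g b.
Hypothesis Hcnt : forall x, countable_set (fun g => f g x <> 0 /\ f g x <> 1).

Lemma box_list x eps : 0 < eps -> forall l, exists oa ob, ray_box le oa ob x /\
  forall z, ray_box le oa ob z -> forall g, In g l -> Rabs (f g z - f g x) < eps.
Proof.
  intros he l. induction l as [|g l IH].
  - exists None, None. split. split; simpl; auto. intros z _ g [].
  - destruct IH as [oa2 [ob2 [h2 h2']]]. destruct (Hc g x eps he) as [oa1 [ob1 [h1 h1']]].
    destruct (box_inter _ _ _ _ _ h1 h2) as [oa [ob [h h']]].
    exists oa, ob. split; auto. intros z hz g' [e|hi].
    + subst. apply h1'. apply h'; auto.
    + apply h2'; auto. apply h'; auto.
Qed.

Lemma sep_low x oa : lowb oa x -> exists l eps, 0 < eps /\ forall y,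
  (forall g, In g l -> Rabs (f g y - f g x) < eps) -> lowb oa y.
Proof.
  destruct oa as [a|]; intro h.
  - destruct (Hs a x h) as [g hg]. exists (g :: nil), (f g x - f g a). split. lra.
    intros y hy. specialize (hy g (or_introl eq_refl)). simpl.
    apply not_le_lt; auto. intro hya. apply Hm with (g := g) in hya. apply Rabs_def2 in hy. lra.
  - exists nil, 1. split. lra. intros; simpl; auto.
Qed.

Lemma sep_upp x ob : uppb ob x -> exists l eps, 0 < eps /\ forall y,
  (forall g, In g l -> Rabs (f g y - f g x) < eps) -> uppb ob y.
Proof.
  destruct ob as [b|]; intro h.
  - destruct (Hs x b h) as [g hg]. exists (g :: nil), (f g b - f g x). split. lra.
    intros y hy. specialize (hy g (or_introl eq_refl)). simpl.
    apply not_le_lt; auto. intro hya. apply Hm with (g := g) in hya. apply Rabs_def2 in hy. lra.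
  - exists nil, 1. split. lra. intros; simpl; auto.
Qed.

Theorem embed_generic : almost_totally_disconnected (order_open le).
Proof.
  exists G, (fun x g => f g x). split; [|split; [|split]].
  - intro x. split; auto.
  - intros x y e. apply NNPP; intro hne.
    assert (hxy : lt x y \/ lt y x).
    { destruct (le_total _ _ Hlin x y); [left|right]; split; auto. }
    destruct hxy as [h|h]; destruct (Hs _ _ h) as [g hg].
    + assert (e' := equal_f e g). simpl in e'. lra.
    + assert (e' := equal_f e g). simpl in e'. lra.
  - intros V HV x hx. destruct (HV _ hx) as [l [eps [he hl]]].
    destruct (box_list x eps he l) as [oa [ob [h1 h2]]].
    exists oa, ob. split; [auto|]. intros z hz. apply hl. intros g hg. apply h2; auto.
  - intros U HU.
    exists (fun q => exists x l eps dl, U x /\ 0 < dl /\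
       (forall y, (forall g, In g l -> Rabs (f g y - f g x) < eps) -> U y) /\
       forall g, In g l -> Rabs (q g - f g x) < eps - dl).
    split.
    + intros q [x [l [eps [dl [h1 [h2 [h3 h4]]]]]]].
      exists l, (dl / 2). split. lra. intros q' hq'.
      exists x, l, eps, (dl / 2). split; auto. split. lra. split; auto.
      intros g hg. specialize (hq' g hg). specialize (h4 g hg).
      apply Rabs_def2 in hq'. apply Rabs_def2 in h4. apply Rabs_def1; lra.
    + intro x. split.
      * intro hx. destruct (HU x hx) as [oa [ob [[h1 h2] h3]]].
        destruct (sep_low x oa h1) as [l1 [e1 [he1 hl1]]].
        destruct (sep_upp x ob h2) as [l2 [e2 [he2 hl2]]].
        exists x, (l1 ++ l2), (Rmin e1 e2), (Rmin e1 e2 / 2).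
        assert (0 < Rmin e1 e2) by (apply Rmin_glb_lt; auto).
        split; auto. split. lra. split.
        -- intros y hy. apply h3. split.
           ++ apply hl1. intros g hg. eapply Rlt_le_trans. apply hy. apply in_or_app; auto. apply Rmin_l.
           ++ apply hl2. intros g hg. eapply Rlt_le_trans. apply hy. apply in_or_app; auto. apply Rmin_r.
        -- intros g _. rewrite Rminus_diag, Rabs_R0. lra.
      * intros [x0 [l [eps [dl [h1 [h2 [h3 h4]]]]]]]. apply h3. intros g hg.
        specialize (h4 g hg). lra.
Qed.
End Emb.

Definition cand {K : Type} (le : K -> K -> Prop) (d : K -> K -> R) (n : nat) (p : K * K) : Prop :=
  lt_of le (fst p) (snd p) /\ (exists z, oint le (fst p) (snd p) z) /\
  exists M, M < / INR (S n) /\ forall s t, oint le (fst p) (snd p) s -> oint le (fst p) (snd p) t -> d s t <= M.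

Definition meets {K : Type} (le : K -> K -> Prop) (p q : K * K) : Prop :=
  exists z, oint le (fst p) (snd p) z /\ oint le (fst q) (snd q) z.

Section Main.
Variable K : Type.
Variable le : K -> K -> Prop.
Variable d : K -> K -> R.
Hypothesis Hlin : linear_order le.
Hypothesis Hcpt : compact_space (order_open le).
Hypothesis Hdsep : forall x y, x <> y -> 0 < d x y.
Hypothesis Hsmall : forall x y, lt_of le x y -> (exists z, oint le x y z) ->
     forall eps, 0 < eps ->
     exists u v, lt_of le u v /\ (exists z, oint le u v z) /\
       (forall z, oint le u v z -> oint le x y z) /\
       exists M, M < eps /\
         (forall s t, oint le u v s -> oint le u v t -> d s t <= M).
Local Notation lt := (lt_of le).
Variable F : nat -> K * K -> Prop.
Hypothesis HF1 : forall n p, F n p -> cand le d n p.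
Hypothesis HF2 : forall n p q, F n p -> F n q -> meets le p q -> p = q.
Hypothesis HF3 : forall n q, cand le d n q -> exists p, F n p /\ meets le p q.

Lemma inside_left x y u1 v1 w : (forall z, oint le u1 v1 z -> oint le x y z) -> oint le u1 v1 w -> le x u1.
Proof.
  intros hs hw. apply NNPP; intro h. apply (not_le_lt _ le Hlin) in h; auto.
  assert (hx : oint le u1 v1 x).
  { split; auto. destruct (hs w hw) as [h1 _]. eapply (lt_trans _ le Hlin); eauto. apply hw. }
  destruct (hs x hx) as [h1 _]. eapply (lt_irrefl _ le); eauto.
Qed.

Lemma inside_right x y u1 v1 w : (forall z, oint le u1 v1 z -> oint le x y z) -> oint le u1 v1 w -> le v1 y.
Proof.
  intros hs hw. apply NNPP; intro h. apply (not_le_lt _ le Hlin) in h; auto.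
  assert (hy : oint le u1 v1 y).
  { split; auto. destruct (hs w hw) as [_ h1]. eapply (lt_trans _ le Hlin); eauto. apply hw. }
  destruct (hs y hy) as [_ h1]. eapply (lt_irrefl _ le); eauto.
Qed.

Lemma step a b (Hab : dense_on le a b) k q :
  le a (fst q) /\ lt (fst q) (snd q) /\ le (snd q) b ->
  exists q', (le a (fst q') /\ lt (fst q') (snd q') /\ le (snd q') b) /\
    (lt (fst q) (fst q') /\ lt (snd q') (snd q) /\
     exists p, F k p /\ forall w, le (fst q') w -> le w (snd q') -> oint le (fst p) (snd p) w).
Proof.
  destruct q as [x y]; simpl. intros [hax [hxy hyb]].
  destruct (Hab x y hax hxy hyb) as [w1 hw1].
  assert (heps : 0 < / INR (S k)) by (apply Rinv_0_lt_compat, lt_0_INR; lia).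
  destruct (Hsmall x y hxy (ex_intro _ w1 hw1) _ heps) as [u1 [v1 [huv1 [hne [hsub [M [hM hMb]]]]]]].
  destruct (HF3 k (u1, v1)) as [[u v] [hF [w [hw hw']]]].
  { split; [|split]; simpl; auto. exists M; split; auto. }
  simpl in hw, hw'.
  assert (hxu1 := inside_left _ _ _ _ _ hsub hw').
  assert (hv1y := inside_right _ _ _ _ _ hsub hw').
  set (m := if excluded_middle_informative (le u u1) then u1 else u).
  assert (hm : le u m /\ le u1 m /\ lt m w).
  { unfold m; destruct (excluded_middle_informative (le u u1)) as [h|h].
    - split; auto. split. apply (le_refl _ le Hlin); auto. apply hw'.
    - apply (not_le_lt _ le Hlin) in h; auto. split. apply (le_refl _ le Hlin); auto. split. apply (lt_le _ le); auto. apply hw. }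
  set (m' := if excluded_middle_informative (le v v1) then v else v1).
  assert (hm' : le m' v /\ le m' v1 /\ lt w m').
  { unfold m'; destruct (excluded_middle_informative (le v v1)) as [h|h].
    - split. apply (le_refl _ le Hlin); auto. split; auto. apply hw.
    - apply (not_le_lt _ le Hlin) in h; auto. split. apply (lt_le _ le); auto. split. apply (le_refl _ le Hlin); auto. apply hw'. }
  destruct hm as [hm1 [hm2 hm3]], hm' as [hm1' [hm2' hm3']].
  assert (hwxy := hsub w hw'). destruct hwxy as [hxw hwy].
  assert (LT := le_trans _ le Hlin). assert (LLT := le_lt_trans _ le Hlin).
  assert (LTL := lt_le_trans _ le Hlin). assert (TT := lt_trans _ le Hlin).
  assert (LE := lt_le _ le).
  assert (hma : le a m) by (apply (LT _ x); auto; apply (LT _ u1); auto).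
  assert (hwb : le w b) by (apply (LT _ y); auto).
  destruct (Hab m w hma hm3 hwb) as [x' hx'].
  assert (haw : le a w) by (apply (LT _ x); auto).
  assert (hm'b : le m' b) by (apply (LT _ v1); auto; apply (LT _ y); auto).
  destruct (Hab w m' haw hm3' hm'b) as [y' hy'].
  destruct hx' as [hx1 hx2], hy' as [hy1 hy2].
  exists (x', y'); simpl. split; [split; [|split]|split; [|split]].
  - apply (LT _ m); auto.
  - apply (TT _ w); auto.
  - apply (LT _ m'); auto.
  - apply (LLT _ m); auto. apply (LT _ u1); auto.
  - apply (LTL _ m'); auto. apply (LT _ v1); auto.
  - exists (u, v). split; auto. intros w' h1 h2. simpl. split.
    + apply (LLT _ m); auto. apply (LTL _ x'); auto.
    + apply (LLT _ y'); auto. apply (LTL _ m'); auto.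
Qed.

Lemma key a b : lt a b -> dense_on le a b -> exists n p, F n p /\ le a (fst p) /\ le (snd p) b.
Proof.
  intros hab Hab. apply NNPP; intro hn.
  assert (hn' : forall n p, F n p -> ~ (le a (fst p) /\ le (snd p) b)) by (intros n p h1 h2; apply hn; eauto).
  clear hn.
  destruct (Hab a b (le_refl _ _ Hlin a) hab (le_refl _ _ Hlin b)) as [w0 [h01 h02]].
  destruct (Hab a w0 (le_refl _ _ Hlin a) h01 (lt_le _ _ _ _ h02)) as [x0 [hx01 hx02]].
  destruct (Hab w0 b (lt_le _ _ _ _ h01) h02 (le_refl _ _ Hlin b)) as [y0 [hy01 hy02]].
  set (P := fun q : K * K => le a (fst q) /\ lt (fst q) (snd q) /\ le (snd q) b).
  set (R := fun k (q q' : K * K) => lt (fst q) (fst q') /\ lt (snd q') (snd q) /\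
     exists p, F k p /\ forall w, le (fst q') w -> le w (snd q') -> oint le (fst p) (snd p) w).
  destruct (seq_choice P R (x0, y0)) as [s [hs0 hs]].
  { split; simpl. apply (lt_le _ le); auto. split. eapply (lt_trans _ le Hlin); eauto. apply (lt_le _ le); auto. }
  { intros k q hq. apply (step a b Hab k q hq). }
  destruct (nested K le Hlin Hcpt (fun k => fst (s k)) (fun k => snd (s k))) as [z hz].
  - intro k. destruct (hs k) as [_ [h _]]. apply (lt_le _ le); auto.
  - intro k. destruct (hs k) as [_ [_ [h _]]]. apply (lt_le _ le); auto.
  - intro k. destruct (hs k) as [[_ [h _]] _]. apply (lt_le _ le); auto.
  - assert (hza : lt a z).
    { destruct (hz 0%nat) as [h _]. rewrite hs0 in h; simpl in h. eapply (lt_le_trans _ le Hlin); eauto. }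
    assert (hzb : lt z b).
    { destruct (hz 0%nat) as [_ h]. rewrite hs0 in h; simpl in h. eapply (le_lt_trans _ le Hlin); eauto. }
    assert (hk : forall k, d z a < / INR (S k) \/ d z b < / INR (S k)).
    { intro k. destruct (hs k) as [_ [_ [_ [[u v] [hF hp]]]]].
      destruct (hz (S k)) as [hz1 hz2]. specialize (hp z hz1 hz2). simpl in hp.
      destruct (HF1 k (u, v) hF) as [_ [_ [M [hM hMb]]]]. simpl in hMb.
      destruct (classic (le a u)) as [hau|hau].
      - right. assert (hbv : lt b v).
        { apply (not_le_lt _ le Hlin); auto. intro h. apply (hn' k (u, v) hF); simpl; auto. }
        assert (hb : oint le u v b) by (split; [eapply (lt_trans _ le Hlin); [apply hp|auto]|auto]).
        eapply Rle_lt_trans; [apply hMb; auto|auto].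
      - left. apply (not_le_lt _ le Hlin) in hau; auto.
        assert (ha : oint le u v a) by (split; [auto|eapply (lt_trans _ le Hlin); [apply hza|apply hp]]).
        eapply Rle_lt_trans; [apply hMb; auto|auto]. }
    assert (hda : 0 < d z a) by (apply Hdsep; intro e; subst; eapply (lt_irrefl _ le); eauto).
    assert (hdb : 0 < d z b) by (apply Hdsep; intro e; subst; eapply (lt_irrefl _ le); eauto).
    set (dl := Rmin (d z a) (d z b)).
    assert (hdl : 0 < dl) by (apply Rmin_glb_lt; auto).
    destruct (exists_nat_gt (/ dl)) as [n hnn].
    assert (h1 : / INR (S n) < dl).
    { rewrite <- (Rinv_inv dl). apply Rinv_lt_contravar.
      apply Rmult_lt_0_compat. apply Rinv_0_lt_compat; auto. apply lt_0_INR; lia.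
      rewrite S_INR. lra. }
    assert (dl <= d z a) by apply Rmin_l. assert (dl <= d z b) by apply Rmin_r.
    destruct (hk n); lra.
Qed.

Definition jump c e := lt c e /\ ~ exists w, oint le c e w.
Definition ind (c z : K) : R := if excluded_middle_informative (lt c z) then 1 else 0.
Definition fG (g : (K * K) + (nat * (K * K))) (z : K) : R :=
  match g with
  | inl (c, e) => if excluded_middle_informative (jump c e) then ind c z else 0
  | inr (n, (u, v)) => if excluded_middle_informative (F n (u, v) /\ lt u v /\ dense_on le u v)
                       then urys le u v z else 0
  end.

Lemma fG_bounds g x : 0 <= fG g x <= 1.
Proof.
  destruct g as [[c e]|[n [u v]]]; simpl; destruct excluded_middle_informative; try lra.
  unfold ind; destruct excluded_middle_informative; lra.
  apply phi_bounds.
Qed.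

Lemma fG_mono g x y : le x y -> fG g x <= fG g y.
Proof.
  intro h. destruct g as [[c e]|[n [u v]]]; simpl; destruct excluded_middle_informative as [hh|hh]; try lra.
  - unfold ind; do 2 destruct excluded_middle_informative; try lra.
    exfalso; apply n. eapply lt_le_trans; eauto.
  - apply phi_mono; auto.
Qed.

Lemma fG_cont g x eps : 0 < eps -> exists oa ob, ray_box le oa ob x /\
   forall z, ray_box le oa ob z -> Rabs (fG g z - fG g x) < eps.
Proof.
  intro he.
  assert (const : (forall z, fG g z = 0) -> exists oa ob, ray_box le oa ob x /\
     forall z, ray_box le oa ob z -> Rabs (fG g z - fG g x) < eps).
  { intro h0. exists None, None. split. split; simpl; auto. intros z _. rewrite !h0.
    rewrite Rminus_diag, Rabs_R0; auto. }
  destruct g as [[c e]|[n [u v]]].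
  - destruct (excluded_middle_informative (jump c e)) as [hj|hj];
      [|apply const; intro z; simpl; destruct excluded_middle_informative; tauto].
    destruct hj as [hce hno].
    assert (E : forall z, fG (inl (c, e)) z = ind c z).
    { intro z; simpl; destruct excluded_middle_informative as [h|h]; auto. exfalso; apply h; split; auto. }
    destruct (classic (lt c x)) as [hx|hx].
    + exists (Some c), None. split. split; simpl; auto.
      intros z [hz _]; simpl in hz. rewrite !E. unfold ind.
      do 2 destruct excluded_middle_informative; try tauto. rewrite Rminus_diag, Rabs_R0; auto.
    + assert (hxc : le x c).
      { destruct (le_or_lt _ _ Hlin x c); auto. tauto. }
      exists None, (Some e). split. split; simpl; auto. eapply le_lt_trans; eauto.
      intros z [_ hz]; simpl in hz. rewrite !E. unfold ind.
      do 2 destruct excluded_middle_informative; try tauto.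
      all: try (exfalso; apply hno; exists z; split; auto; fail).
      all: rewrite Rminus_diag, Rabs_R0; auto.
  - destruct (excluded_middle_informative (F n (u, v) /\ lt u v /\ dense_on le u v)) as [hj|hj];
      [|apply const; intro z; simpl; destruct excluded_middle_informative; tauto].
    destruct hj as [hF [huv hd]].
    assert (E : forall z, fG (inr (n, (u, v))) z = urys le u v z).
    { intro z; simpl; destruct excluded_middle_informative as [h|h]; auto. tauto. }
    destruct (phi_lower K le Hlin u v huv hd x eps he) as [oa [h1 h2]].
    destruct (phi_upper K le Hlin u v huv hd x eps he) as [ob [h3 h4]].
    exists oa, ob. split. split; auto. intros z [hz1 hz2]. rewrite !E.
    specialize (h2 z hz1). specialize (h4 z hz2). apply Rabs_def1; lra.
Qed.

Lemma fG_sep a b : lt a b -> exists g, fG g a < fG g b.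
Proof.
  intro hab. destruct (classic (dense_on le a b)) as [hd|hd].
  - destruct (key a b hab hd) as [n [[u v] [hF [hau hvb]]]]. simpl in hau, hvb.
    destruct (HF1 n (u, v) hF) as [huv _]. simpl in huv.
    assert (hduv : dense_on le u v).
    { intros c e h1 h2 h3. apply hd; auto. eapply le_trans; eauto. eapply le_trans; eauto. }
    exists (inr (n, (u, v))). simpl. destruct excluded_middle_informative as [h|h]; [|tauto].
    rewrite (phi_low K le Hlin u v huv hduv a hau), (phi_high K le u v b hvb). lra.
  - unfold dense_on in hd.
    apply not_all_ex_not in hd; destruct hd as [c hd].
    apply not_all_ex_not in hd; destruct hd as [e hd].
    apply imply_to_and in hd; destruct hd as [h1 hd].
    apply imply_to_and in hd; destruct hd as [h2 hd].
    apply imply_to_and in hd; destruct hd as [h3 hd].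
    exists (inl (c, e)). simpl. destruct excluded_middle_informative as [h|h].
    + unfold ind. destruct (excluded_middle_informative (lt c a)) as [ha|ha];
        [exfalso; exact (lt_not_le _ le Hlin _ _ ha h1)|].
      destruct (excluded_middle_informative (lt c b)) as [hb|hb]; [lra|].
      exfalso; apply hb; apply (lt_le_trans _ le Hlin _ e); auto.
    + exfalso; apply h; split; auto.
Qed.

Lemma fG_nb g x : fG g x <> 0 /\ fG g x <> 1 ->
  exists n u v, g = inr (n, (u, v)) /\ F n (u, v) /\ oint le u v x.
Proof.
  intros [h0 h1]. destruct g as [[c e]|[n [u v]]]; simpl in h0, h1.
  - exfalso. destruct excluded_middle_informative; [|tauto].
    unfold ind in *; destruct excluded_middle_informative; tauto.
  - destruct excluded_middle_informative as [[hF [huv hd]]|h]; [|tauto].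
    exists n, u, v. split; auto. split; auto. split.
    + apply not_le_lt; auto. intro h. apply h0. apply phi_low; auto.
    + apply not_le_lt; auto. intro h. apply h1. apply phi_high; auto.
Qed.

Lemma fG_count x : countable_set (fun g => fG g x <> 0 /\ fG g x <> 1).
Proof.
  exists (fun g => match g with inl _ => 0%nat | inr (n, _) => n end).
  intros g g' hg hg' e.
  destruct (fG_nb g x hg) as [n [u [v [-> [hF hx]]]]].
  destruct (fG_nb g' x hg') as [n' [u' [v' [-> [hF' hx']]]]].
  simpl in e. subst n'. f_equal. f_equal.
  apply (HF2 n (u, v) (u', v')); auto. exists x; split; auto.
Qed.

Theorem main_sec : almost_totally_disconnected (order_open le).
Proof.
  apply (embed_generic K le Hlin _ fG fG_bounds fG_mono fG_cont fG_sep fG_count).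
Qed.

End Main.

Theorem mainTheorem8 (K : Type) (le : K -> K -> Prop) (d : K -> K -> R)
  (Hlin : linear_order le)
  (Hcpt : compact_space (order_open le))
  (Hdpos : forall x y, 0 <= d x y)
  (Hdsym : forall x y, d x y = d y x)
  (Hdsep : forall x y, x <> y -> 0 < d x y)
  (Hsmall : forall x y, lt_of le x y -> (exists z, oint le x y z) ->
     forall eps, 0 < eps ->
     exists u v, lt_of le u v /\ (exists z, oint le u v z) /\
       (forall z, oint le u v z -> oint le x y z) /\
       exists M, M < eps /\
         (forall s t, oint le u v s -> oint le u v t -> d s t <= M)) :
  almost_totally_disconnected (order_open le).
Proof.
  assert (H : forall n, exists P : K * K -> Prop,
    (forall p, P p -> cand le d n p) /\ (forall p q, P p -> P q -> meets le p q -> p = q) /\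
    (forall q, cand le d n q -> exists p, P p /\ meets le p q)).
  { intro n. apply maximal_family.
    - intros p q [z [h1 h2]]. exists z; auto.
    - intros p [_ [[z hz] _]]. exists z; auto. }
  set (F := fun n => proj1_sig (constructive_indefinite_description _ (H n))).
  assert (HF : forall n, let P := F n in
    (forall p, P p -> cand le d n p) /\ (forall p q, P p -> P q -> meets le p q -> p = q) /\
    (forall q, cand le d n q -> exists p, P p /\ meets le p q)).
  { intro n. exact (proj2_sig (constructive_indefinite_description _ (H n))). }
  apply (main_sec K le d Hlin Hcpt Hdsep Hsmall F).
  - intros n; apply (HF n).
  - intros n; apply (HF n).
  - intros n; apply (HF n).
Qed.
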